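(* The output $x_T$ of Algorithm 1 satisfies $\mathbb{E}[f_\mu(x_T)]\le -(1-5\epsilon)\,\mathrm{OPT}$, where the expectation is over the random choices $t_0,\dots,t_{T-1}$.
   Context: Standing setup: $A\in\mathbb{R}^{m\times n}_{\ge 0}$ has no zero column and is normalized so that $\min_{i\in[n]}\|A_{:i}\|_\infty=1$, where $A_{:i}$ denotes the $i$-th column. The packing LP is $\max\{\mathbf 1^Tx: x\ge 0,\ Ax\le \mathbf 1\}$ with optimal value $\mathrm{OPT}$. $\epsilon\in(0,1/2]$. $\log$ is the natural logarithm unless written $\log_2$. $\mu=\frac{\epsilon}{4\log(nm/\epsilon)}$, $p_j(x)=\exp\big(\frac{1}{\mu}((Ax)_j-1)\big)$ for $j\in[m]$, and $f_\mu(x)=-\mathbf 1^Tx+\mu\sum_{j=1}^m p_j(x)$ for $x\ge 0$; its gradient is $\nabla_i f_\mu(x)=-1+\sum_j A_{ji}p_j(x)\ge -1$. Algorithm 1: set $\alpha=\mu/20$, $w=\lceil\log_2(1/\epsilon)\rceil$, $T=\lceil 10w\log(2n)/(\alpha\epsilon)\rceil$, and $x_0[i]=\frac{1-\epsilon/2}{n\|A_{:i}\|_\infty}$ for $i\in[n]$. For $k=0,\dots,T-1$: choose $t_k\in\{0,\dots,w-1\}$ uniformly at random, independently of the past; writing $g_i=\nabla_i f_\mu(x_k)$, define $\xi_k[i]=0$ if $|g_i|\le\epsilon$, $\xi_k[i]=g_i$ if $\epsilon<|g_i|\le 1$, $\xi_k[i]=1$ if $g_i>1$; for $t\in\{0,\dots,w-1\}$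 define $\xi^{(t)}_k[i]=\xi_k[i]$ if $\epsilon2^t<|\xi_k[i]|\le\epsilon2^{t+1}$ and $\xi^{(t)}_k[i]=0$ otherwise; set $x^{(t)}_{k+1}[i]=x_k[i]\exp(-\alpha\,\xi^{(t)}_k[i])$ and $x_{k+1}=x^{(t_k)}_{k+1}$. Output $x_T$. *)

(* Defs.v *)
From Stdlib Require Import Reals Lra Lia ZArith.
Open Scope R_scope.

Fixpoint rsum (k : nat) (f : nat -> R) : R :=
  match k with O => 0 | S k' => rsum k' f + f k' end.

Fixpoint rmaxk (k : nat) (f : nat -> R) : R :=
  match k with O => 0 | S O => f O | S k' => Rmax (rmaxk k' f) (f k') end.

(* ceiling of a real, as a natural number (negative values -> 0) *)
Definition Rceil (y : R) : Z := (1 - up (- y))%Z.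
Definition nceil (y : R) : nat := Z.to_nat (Rceil y).

Definition log2 (y : R) : R := ln y / ln 2.

(* A : matrix given by entries A j i, j < m (rows), i < n (columns). *)
Definition colnorm (m : nat) (A : nat -> nat -> R) (i : nat) : R :=
  rmaxk m (fun j => Rabs (A j i)).

Definition feasible (m n : nat) (A : nat -> nat -> R) (x : nat -> R) : Prop :=
  (forall i, (i < n)%nat -> 0 <= x i) /\
  (forall j, (j < m)%nat -> rsum n (fun i => A j i * x i) <= 1).

Definition is_OPT (m n : nat) (A : nat -> nat -> R) (OPT : R) : Prop :=
  (forall x, feasible m n A x -> rsum n x <= OPT) /\
  (exists x, feasible m n A x /\ rsum n x = OPT).

Section Alg.
Variables (m n : nat) (A : nat -> nat -> R) (eps : R).

Definition mu : R := eps / (4 * ln (INR n * INR m / eps)).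

Definition pj (x : nat -> R) (j : nat) : R :=
  exp (/ mu * (rsum n (fun i => A j i * x i) - 1)).

Definition f_mu (x : nat -> R) : R :=
  - rsum n x + mu * rsum m (fun j => pj x j).

Definition grad (x : nat -> R) (i : nat) : R :=
  -1 + rsum m (fun j => A j i * pj x j).

Definition alpha : R := mu / 20.
Definition w : nat := nceil (log2 (/ eps)).
Definition T : nat :=
  nceil (10 * INR w * ln (2 * INR n) / (alpha * eps)).

Definition x0 (i : nat) : R := (1 - eps / 2) / (INR n * colnorm m A i).

Definition xi (x : nat -> R) (i : nat) : R :=
  let g := grad x i in
  if Rle_dec (Rabs g) eps then 0
  else if Rle_dec g 1 then g else 1.

Definition xi_t (t : nat) (x : nat -> R) (i : nat) : R :=
  let v := xi x i in
  if Rlt_dec (eps * 2 ^ t) (Rabs v) then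
    (if Rle_dec (Rabs v) (eps * 2 ^ (S t)) then v else 0)
  else 0.

Definition step (t : nat) (x : nat -> R) (i : nat) : R :=
  x i * exp (- alpha * xi_t t x i).

(* expected value of f_mu after k more iterations started from x, where each
   iteration picks t uniformly in {0,..,w-1} independently *)
Fixpoint expect_f (k : nat) (x : nat -> R) : R :=
  match k with
  | O => f_mu x
  | S k' => / INR w * rsum w (fun t => expect_f k' (step t x))
  end.

End Alg.

(* Main.v *)
Require Import Defs.
From Stdlib Require Import Reals Lra Lia ZArith.
Open Scope R_scope.


Lemma rsum_ext k f g : (forall i, (i < k)%nat -> f i = g i) -> rsum k f = rsum k g.
Proof. induction k; simpl; intros H; auto. rewrite IHk by (intros; apply H; lia). rewrite H by lia; auto. Qed.

Lemma rsum_le k f g : (forall i, (i < k)%nat -> f i <= g i) -> rsum k f <= rsum k g.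
Proof. induction k; simpl; intros H. lra. assert (rsum k f <= rsum k g) by (apply IHk; intros; apply H; lia). specialize (H k ltac:(lia)). lra. Qed.

Lemma rsum_plus k f g : rsum k (fun i => f i + g i) = rsum k f + rsum k g.
Proof. induction k; simpl. lra. rewrite IHk; lra. Qed.

Lemma rsum_minus k f g : rsum k (fun i => f i - g i) = rsum k f - rsum k g.
Proof. induction k; simpl. lra. rewrite IHk; lra. Qed.

Lemma rsum_scal k c f : rsum k (fun i => c * f i) = c * rsum k f.
Proof. induction k; simpl. lra. rewrite IHk; lra. Qed.

Lemma rsum_const k c : rsum k (fun _ => c) = INR k * c.
Proof. induction k; simpl rsum. simpl; lra. rewrite IHk, S_INR; lra. Qed.

Lemma rsum_nonneg k f : (forall i, (i < k)%nat -> 0 <= f i) -> 0 <= rsum k f.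
Proof. intros H. rewrite <- (Rmult_0_r (INR k)), <- rsum_const. apply rsum_le; auto. Qed.

Lemma rsum_swap a b F : rsum a (fun i => rsum b (fun j => F i j)) = rsum b (fun j => rsum a (fun i => F i j)).
Proof. induction a; simpl. rewrite rsum_const; simpl; lra. rewrite IHa, <- rsum_plus. auto. Qed.

Lemma rsum_term k f i : (forall i, (i < k)%nat -> 0 <= f i) -> (i < k)%nat -> f i <= rsum k f.
Proof. induction k; intros H Hi. lia. simpl. destruct (Nat.eq_dec i k).
 subst. assert (0 <= rsum k f) by (apply rsum_nonneg; intros; apply H; lia). lra.
 assert (f i <= rsum k f) by (apply IHk; [intros; apply H; lia| lia]). specialize (H k ltac:(lia)). lra. Qed.

Lemma rsum_abs k f : Rabs (rsum k f) <= rsum k (fun i => Rabs (f i)).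
Proof. induction k; simpl. rewrite Rabs_R0; lra. eapply Rle_trans. apply Rabs_triang. lra. Qed.

Lemma rsum_CS k wt z : (forall i, (i < k)%nat -> 0 <= wt i) ->
  (rsum k (fun i => wt i * z i))^2 <= rsum k wt * rsum k (fun i => wt i * (z i)^2).
Proof. intros Hw. set (S0 := rsum k wt). set (S1 := rsum k (fun i => wt i * z i)). set (S2 := rsum k (fun i => wt i * (z i)^2)).
 assert (H0 : 0 <= S0) by (apply rsum_nonneg; auto).
 assert (Hq : forall l, 0 <= S2 - 2 * l * S1 + l^2 * S0).
 { intros l. assert (E : S2 - 2 * l * S1 + l^2 * S0 = rsum k (fun i => wt i * (z i - l)^2)).
   { unfold S0, S1, S2. rewrite <- (rsum_scal k (l^2)), <- (rsum_scal k (2*l)), <- rsum_minus, <- rsum_plus.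
     apply rsum_ext; intros; ring. }
   rewrite E. apply rsum_nonneg; intros. apply Rmult_le_pos; auto. apply pow2_ge_0. }
 destruct (Req_dec S0 0) as [Z|NZ].
 - assert (S1 = 0). { destruct (Req_dec S1 0) as [|N1]; auto. specialize (Hq ((S2 + 1) / (2 * S1))).
     rewrite Z in Hq. replace (S2 - 2 * ((S2 + 1) / (2 * S1)) * S1 + ((S2 + 1) / (2 * S1)) ^ 2 * 0) with (-1) in Hq by (field; auto). lra. }
   rewrite H, Z; simpl; lra.
 - specialize (Hq (S1 / S0)). assert (S0 > 0) by lra.
   assert (0 <= S0 * (S2 - 2 * (S1 / S0) * S1 + (S1 / S0) ^ 2 * S0)) by (apply Rmult_le_pos; lra).
   replace (S0 * (S2 - 2 * (S1 / S0) * S1 + (S1 / S0) ^ 2 * S0)) with (S0 * S2 - S1^2) in H1 by (field; lra). lra.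
Qed.

Lemma rsum_delta k i0 F : (i0 < k)%nat -> rsum k (fun i => F i * (if Nat.eq_dec i i0 then 1 else 0)) = F i0.
Proof. induction k; intros H. lia. simpl. destruct (Nat.eq_dec k i0).
 - subst i0. replace (rsum k (fun i => F i * (if Nat.eq_dec i k then 1 else 0))) with (rsum k (fun _ => 0)).
   rewrite rsum_const; ring. apply rsum_ext; intros i Hi. destruct (Nat.eq_dec i k). lia. ring.
 - rewrite IHk by lia. ring. Qed.

Lemma Rabs_le_inv' x a : Rabs x <= a -> -a <= x <= a.
Proof. unfold Rabs; destruct (Rcase_abs x); lra. Qed.

Lemma exp_quad y : Rabs y <= 1/4 -> exp y <= 1 + y + y^2.
Proof. intros H. apply Rabs_le_inv' in H.
 assert (E : exp y = exp (y/2) * exp (y/2)) by (rewrite <- exp_plus; f_equal; lra).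
 assert (H1 := exp_ineq1_le (- (y/2))).
 assert (E2 : exp (y/2) * exp (-(y/2)) = 1) by (rewrite <- exp_plus; replace (y/2 + - (y/2)) with 0 by lra; apply exp_0).
 assert (P := exp_pos (y/2)). set (a := exp (y/2)) in *. set (b := exp (-(y/2))) in *.
 rewrite E. assert (a * (1 - y/2) <= 1) by nra. 
 assert (a <= 1 / (1 - y/2)). { apply (Rmult_le_reg_r (1 - y/2)). lra. field_simplify; lra. }
 assert (a * a <= (1 / (1 - y/2))^2) by nra.
 assert ((1 / (1 - y/2))^2 <= 1 + y + y^2).
 { apply (Rmult_le_reg_r ((1 - y/2)^2)). nra. field_simplify; [|lra]. nra. }
 nra.
Qed.

Lemma exp_conv a b : exp a * (1 + b - a) <= exp b.
Proof. replace (exp b) with (exp a * exp (b - a)) by (rewrite <- exp_plus; f_equal; ring).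
 apply Rmult_le_compat_l. left; apply exp_pos. pose proof (exp_ineq1_le (b-a)). lra. Qed.

Lemma ln_le_sub1 x : 0 < x -> ln x <= x - 1.
Proof. intros H. pose proof (exp_ineq1_le (ln x)). rewrite exp_ln in H0; lra. Qed.

Lemma ln_mono a b : 0 < a -> a <= b -> ln a <= ln b.
Proof. intros Ha Hb. destruct Hb. left; apply ln_increasing; auto. subst; lra. Qed.

Lemma ln_pos' a : 1 < a -> 0 < ln a.
Proof. intros. rewrite <- ln_1. apply ln_increasing; lra. Qed.

Lemma ln_nonneg a : 1 <= a -> 0 <= ln a.
Proof. intros. rewrite <- ln_1. apply ln_mono; lra. Qed.

Lemma ln2_ge : 1/2 <= ln 2.
Proof. destruct (Rle_lt_dec (1/2) (ln 2)) as [|H]; auto. exfalso.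
 assert (exp (ln 2) < exp (1/2)) by (apply exp_increasing; auto). rewrite exp_ln in H0 by lra.
 assert (exp (1/2) * exp (1/2) = exp 1) by (rewrite <- exp_plus; f_equal; lra).
 pose proof exp_le_3. nra. Qed.

Lemma ln_half Y : 0 < Y -> ln Y <= Y / 2.
Proof. intros H. assert (exp (Y/4) * exp (Y/4) = exp (Y/2)) by (rewrite <- exp_plus; f_equal; lra).
 pose proof (exp_ineq1_le (Y/4)). assert ((1 + Y/4) * (1+Y/4) <= exp (Y/4) * exp (Y/4)) by (apply Rmult_le_compat; lra). assert ((1+Y/4)*(1+Y/4) - Y = (1-Y/4)^2) by field. pose proof (pow2_ge_0 (1 - Y/4)). assert (Y <= exp (Y/2)) by lra.
 rewrite <- (ln_exp (Y/2)). apply ln_mono; auto. Qed.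

Lemma nceil_ge y : y <= INR (nceil y).
Proof. unfold nceil, Rceil. destruct (archimed (- y)) as [H1 H2].
 set (z := (1 - up (- y))%Z). assert (y <= IZR z) by (unfold z; rewrite minus_IZR; simpl; lra).
 rewrite INR_IZR_INZ, ZifyInst.of_nat_to_nat_eq. eapply Rle_trans; [exact H|]. apply IZR_le; lia. Qed.

Lemma rmaxk_ge k f j : (j < k)%nat -> f j <= rmaxk k f.
Proof. induction k as [|k IH]; intros Hj. lia. destruct k as [|k].
 - assert (j = 0%nat) by lia; subst; simpl; lra.
 - change (rmaxk (S (S k)) f) with (Rmax (rmaxk (S k) f) (f (S k))).
   destruct (Nat.eq_dec j (S k)). subst. apply Rmax_r.
   eapply Rle_trans; [apply IH; lia| apply Rmax_l]. Qed.

Lemma rmaxk_attain k f : (1 <= k)%nat -> exists j, (j < k)%nat /\ rmaxk k f = f j.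
Proof. induction k as [|k IH]; intros Hk. lia. destruct k as [|k].
 - exists 0%nat; split; auto.
 - change (rmaxk (S (S k)) f) with (Rmax (rmaxk (S k) f) (f (S k))).
   destruct (IH ltac:(lia)) as [j [Hj Ej]]. unfold Rmax. destruct (Rle_dec (rmaxk (S k) f) (f (S k))).
   exists (S k); split; auto. exists j; split; auto; lia. Qed.

Lemma exp_m1_bounds a : Rabs a <= 1/4 -> - a <= exp (- a) - 1 <= - a + a^2.
Proof. intros H. split. pose proof (exp_ineq1_le (-a)); lra.
 assert (Rabs (-a) <= 1/4) by (rewrite Rabs_Ropp; auto). pose proof (exp_quad (-a) H0). nra. Qed.

Lemma pow_exp_ln2 k : 2 ^ k = exp (INR k * ln 2).
Proof. induction k. simpl. rewrite Rmult_0_l, exp_0; auto.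
 rewrite S_INR, Rmult_plus_distr_r, Rmult_1_l, exp_plus, exp_ln, <- IHk by lra. simpl; ring. Qed.

Lemma coord_ineq x al g xi : 0 < x -> 0 < al <= 1/80 -> -1 <= g ->
  (xi = 0 \/ (xi = 1 /\ 1 < g) \/ (xi = g /\ Rabs g <= 1)) ->
  x * (exp (- (al * xi)) - 1) * g + 3/10 * al * x * xi^2 * (g + 1) <= - (1/3) * al * x * xi * g.
Proof. intros Hx Hal Hg [E|[[E Hg1]|[E Hg1]]]; subst.
 - rewrite Rmult_0_r, Ropp_0, exp_0. lra.
 - assert (Rabs (al * 1) <= 1/4) by (rewrite Rmult_1_r, Rabs_right; lra).
   destruct (exp_m1_bounds _ H) as [_ H2]. set (e := exp (- (al * 1)) - 1) in *.
   assert (al^2 <= al/80) by nra. assert (e <= - al + al / 80) by (replace ((al*1)^2) with (al^2) in H2 by ring; lra).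
   assert (x * e * g <= x * (- al + al / 80) * g). { apply Rmult_le_compat_r. lra. apply Rmult_le_compat_l; nra. }
   assert (al * x * (g * (-1 + 1/80 + 3/10 + 1/3) + 3/10) <= 0).
   { assert (0 < al * x) by nra. assert (g * (-1 + 1/80 + 3/10 + 1/3) + 3/10 <= 0) by lra. nra. }
   replace (1^2) with 1 by ring. 
   assert (x * (- al + al / 80) * g + 3/10 * al * x * 1 * (g + 1) - - (1/3) * al * x * 1 * g = al * x * (g * (-1 + 1/80 + 3/10 + 1/3) + 3/10)) by field.
   lra.
 - assert (Rabs (al * g) <= 1/4) by (rewrite Rabs_mult, Rabs_right by lra; nra).
   destruct (exp_m1_bounds _ H) as [H1 H2]. set (e := exp (- (al * g)) - 1) in *.
   assert (Hgg: -1 <= g <= 1) by (unfold Rabs in Hg1; destruct Rcase_abs; lra).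
   assert (Hg2 : 0 <= g^2) by nra.
   assert (e * g <= - al * g^2 + al * g^2 / 80).
   { destruct (Rle_dec 0 g). assert (al * g <= 1/80) by nra. assert (e * g <= (- (al*g) + (al*g)^2) * g) by (apply Rmult_le_compat_r; lra).
     assert ((al*g)^2 * g = (al * g^2) * (al * g)) by ring. assert (0 <= al * g^2) by nra.
     assert ((al * g^2) * (al * g) <= (al * g^2) * (1/80)) by (apply Rmult_le_compat_l; lra). nra.
     assert (0 <= e + al * g) by lra. assert (g < 0) by lra. assert ((e + al*g) * g <= 0) by nra. nra. }
   assert (x * (e * g) <= x * (- al * g^2 + al * g^2 / 80)) by (apply Rmult_le_compat_l; lra).
   assert (3/10 * al * x * g^2 * (g+1) <= 3/10 * al * x * g^2 * 2).
   { apply Rmult_le_compat_l. assert (0 <= al * x) by nra. nra. lra. }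
   assert (0 <= al * x * g^2) by (assert (0 <= al * x) by nra; nra).
   assert (x * e * g + 3 / 10 * al * x * g ^ 2 * (g + 1) - - (1 / 3) * al * x * g * g <= al * x * g^2 * (-1 + 1/80 + 6/10 + 1/3)).
   { assert (x * e * g = x * (e * g)) by ring. assert (- (1 / 3) * al * x * g * g = - (1/3) * (al * x * g^2)) by ring.
     assert (x * (- al * g^2 + al * g^2 / 80) = al * x * g^2 * (-1 + 1/80)) by field. nra. }
   nra.
Qed.

Section Main.
Variables (m n : nat) (A : nat -> nat -> R) (eps : R).
Hypothesis Heps : 0 < eps <= 1/2.
Hypothesis HA : forall j i, (j < m)%nat -> (i < n)%nat -> 0 <= A j i.
Hypothesis Hm : (1 <= m)%nat.
Hypothesis Hn : (1 <= n)%nat.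
Hypothesis Hcol : forall i, (i < n)%nat -> 1 <= colnorm m A i.

Notation MU := (mu m n eps).
Notation AL := (alpha m n eps).
Notation f := (f_mu m n A eps).
Notation g := (grad m n A eps).
Notation P := (pj m n A eps).
Notation XI := (xi m n A eps).
Notation XIt := (xi_t m n A eps).
Notation stp := (step m n A eps).
Notation W := (w eps).
Definition Srow (x : nat -> R) (j : nat) := rsum n (fun i => A j i * x i).
Definition NN := INR n * INR m / eps.
Definition LL := ln NN.

Lemma NN_ge : 2 * INR n * INR m <= NN.
Proof. unfold NN. assert (1 <= INR n) by (apply (le_INR 1); auto). assert (1 <= INR m) by (apply (le_INR 1); auto).
 assert (2 <= /eps) by (apply (Rmult_le_reg_r eps); [lra| rewrite Rinv_l; lra]). unfold Rdiv.
 assert (0 <= INR n * INR m) by nra. nra. Qed.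

Lemma INRn_ge : 1 <= INR n. Proof. apply (le_INR 1); auto. Qed.
Lemma INRm_ge : 1 <= INR m. Proof. apply (le_INR 1); auto. Qed.

Lemma NN_ge2 : 2 <= NN.
Proof. pose proof NN_ge. pose proof INRn_ge. pose proof INRm_ge. nra. Qed.

Lemma LL_ge : 1/2 <= LL.
Proof. unfold LL. eapply Rle_trans. apply ln2_ge. apply ln_mono; pose proof NN_ge2; lra. Qed.

Lemma mu_eq : MU = eps / (4 * LL). Proof. reflexivity. Qed.

Lemma mu_pos : 0 < MU.
Proof. rewrite mu_eq. pose proof LL_ge. apply Rdiv_lt_0_compat; lra. Qed.

Lemma mu_le : MU <= eps / 2.
Proof. rewrite mu_eq. pose proof LL_ge. apply (Rmult_le_reg_r (4 * LL)). lra. field_simplify; nra. Qed.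

Lemma al_eq : AL = MU / 20. Proof. reflexivity. Qed.
Lemma al_pos : 0 < AL. Proof. rewrite al_eq; pose proof mu_pos; lra. Qed.
Lemma al_le : AL <= 1/80. Proof. rewrite al_eq; pose proof mu_le; lra. Qed.

Lemma eps_over_mu : eps / MU = 4 * LL.
Proof. rewrite mu_eq. pose proof LL_ge. field. lra. Qed.

Lemma col_attain i : (i < n)%nat -> exists j, (j < m)%nat /\ A j i = colnorm m A i.
Proof. intros Hi. destruct (rmaxk_attain m (fun j => Rabs (A j i)) Hm) as [j [Hj E]].
 exists j; split; auto. unfold colnorm. rewrite E. rewrite Rabs_right; auto. apply Rle_ge, HA; auto. Qed.

Lemma col_ge i j : (i < n)%nat -> (j < m)%nat -> A j i <= colnorm m A i.
Proof. intros Hi Hj. unfold colnorm. eapply Rle_trans; [|apply (rmaxk_ge _ (fun j => Rabs (A j i)) j Hj)]. apply Rle_abs. Qed.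

Lemma P_pos x j : 0 < P x j. Proof. apply exp_pos. Qed.

Lemma grad_ge x i : (i < n)%nat -> -1 <= g x i.
Proof. intros Hi. unfold grad. assert (0 <= rsum m (fun j => A j i * P x j)).
 apply rsum_nonneg. intros j Hj. apply Rmult_le_pos. apply HA; auto. left; apply P_pos. lra. Qed.

Lemma xi_cases x i : (i < n)%nat ->
  (XI x i = 0 /\ Rabs (g x i) <= eps) \/ (XI x i = 1 /\ 1 < g x i) \/
  (XI x i = g x i /\ eps < Rabs (g x i) <= 1).
Proof. intros Hi. pose proof (grad_ge x i Hi). unfold xi.
 destruct (Rle_dec (Rabs (g x i)) eps). left; auto.
 destruct (Rle_dec (g x i) 1). right; right. split; auto. split. lra. unfold Rabs; destruct Rcase_abs; lra.
 right; left; split; auto; lra. Qed.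

Lemma xit_cases t x i : XIt t x i = 0 \/ XIt t x i = XI x i.
Proof. unfold xi_t. destruct Rlt_dec; [destruct Rle_dec|]; auto. Qed.

Lemma W_facts : 1 <= INR W /\ 1 <= eps * 2 ^ W.
Proof. pose proof (nceil_ge (log2 (/ eps))). fold W in H. unfold log2 in H.
 assert (Hl2 := ln2_ge). assert (ln 2 <= ln (/eps)) by (apply ln_mono; [lra| apply (Rmult_le_reg_r eps); [lra|rewrite Rinv_l; lra]]).
 split.
 - eapply Rle_trans; [|apply H]. apply (Rmult_le_reg_r (ln 2)). lra. unfold Rdiv. rewrite Rmult_assoc, Rinv_l; lra.
 - rewrite pow_exp_ln2. assert (ln (/eps) <= INR W * ln 2).
   { apply (Rmult_le_reg_r (/ ln 2)). apply Rinv_0_lt_compat; lra. rewrite Rmult_assoc, Rinv_r by lra. rewrite Rmult_1_r. apply H. }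
   assert (/eps <= exp (INR W * ln 2)). { rewrite <- (exp_ln (/eps)) at 1 by (apply Rinv_0_lt_compat; lra).
     destruct H1. left; apply exp_increasing; auto. rewrite H1; lra. }
   apply (Rmult_le_compat_l eps) in H2; [|lra]. rewrite Rinv_r in H2; lra. Qed.

Lemma xi_decomp_gen x i k : rsum k (fun t => XIt t x i) =
  (if Rlt_dec eps (Rabs (XI x i)) then if Rle_dec (Rabs (XI x i)) (eps * 2 ^ k) then XI x i else 0 else 0).
Proof. induction k.
 - simpl. destruct Rlt_dec; [destruct Rle_dec|]; auto; lra.
 - simpl rsum. rewrite IHk. unfold xi_t. set (v := XI x i).
   assert (1 <= 2 ^ k) by (apply pow_R1_Rle; lra). change (2 ^ S k) with (2 * 2 ^ k).
   destruct (Rlt_dec eps (Rabs v)); destruct (Rle_dec (Rabs v) (eps * 2 ^ k));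
   destruct (Rlt_dec (eps * 2 ^ k) (Rabs v)); destruct (Rle_dec (Rabs v) (eps * (2 * 2 ^ k))); try lra; nra. Qed.

Lemma xi_decomp x i : (i < n)%nat -> rsum W (fun t => XIt t x i) = XI x i.
Proof. intros Hi. rewrite xi_decomp_gen. destruct W_facts as [_ HW].
 destruct (xi_cases x i Hi) as [[E _]|[[E _]|[E [H1 H2]]]].
 - rewrite E. destruct Rlt_dec; [destruct Rle_dec|]; auto.
 - rewrite E, Rabs_R1. destruct Rlt_dec; [destruct Rle_dec|]; auto; lra.
 - rewrite E. destruct Rlt_dec; [destruct Rle_dec|]; auto; lra. Qed.


Definition Inv x := (forall i, (i < n)%nat -> 0 < x i) /\ f x <= 0.

Lemma Srow_nonneg x j : (forall i, (i < n)%nat -> 0 < x i) -> (j < m)%nat -> 0 <= Srow x j.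
Proof. intros Hx Hj. apply rsum_nonneg; intros i Hi. apply Rmult_le_pos; [apply HA; auto| left; auto]. Qed.

Lemma x_le_Srow x i : (forall i, (i < n)%nat -> 0 < x i) -> (i < n)%nat ->
  exists j, (j < m)%nat /\ x i <= Srow x j.
Proof. intros Hx Hi. destruct (col_attain i Hi) as [j [Hj E]]. exists j; split; auto.
 pose proof (Hcol i Hi). pose proof (Hx i Hi).
 eapply Rle_trans; [| apply (rsum_term n (fun i => A j i * x i) i); auto].
 simpl. nra. intros k Hk. apply Rmult_le_pos; [apply HA; auto| left; auto]. Qed.

Lemma NN_LL : exp LL = NN. Proof. unfold LL. apply exp_ln. pose proof NN_ge2; lra. Qed.

Lemma E_bounds : 2 * INR n <= MU * exp (eps / MU) /\ INR n <= exp (eps / MU).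
Proof. rewrite eps_over_mu. pose proof NN_ge. pose proof NN_ge2. pose proof INRn_ge. pose proof INRm_ge.
 assert (E4 : exp (4 * LL) = NN^4). { replace (4 * LL) with (LL + LL + LL + LL) by ring. rewrite !exp_plus, NN_LL. ring. }
 rewrite E4. assert (HL := ln_half NN ltac:(lra)). fold LL in HL. pose proof LL_ge.
 assert (NN <= NN^4) by (assert (1 <= NN^3) by (apply pow_R1_Rle; lra); simpl in *; nra).
 split; [|nra]. rewrite mu_eq.
 assert (Hen : eps * NN = INR n * INR m) by (unfold NN; field; lra).
 assert (eps / (4 * LL) * NN^4 >= eps / (2 * NN) * NN ^ 4).
 { apply Rle_ge, Rmult_le_compat_r. apply pow_le; lra. unfold Rdiv. apply Rmult_le_compat_l. lra.
   apply Rinv_le_contravar; lra. }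
 assert (eps / (2 * NN) * NN ^ 4 = INR n * INR m * NN^2 / 2) by (rewrite <- Hen; field; lra).
 assert (4 <= NN^2) by (simpl; nra). 
 assert (INR n * INR m * NN^2 / 2 >= 2 * INR n) by (assert (INR n * INR m >= INR n) by nra; nra). lra. Qed.

Lemma row_bound x : Inv x -> forall j, (j < m)%nat -> Srow x j <= 1 + eps.
Proof. intros [Hx Hf] j Hj. set (M := rmaxk m (Srow x)).
 assert (HjM : Srow x j <= M) by (apply rmaxk_ge; auto).
 assert (Hs : rsum n x <= INR n * M).
 { rewrite <- rsum_const. apply rsum_le. intros i Hi. destruct (x_le_Srow x i Hx Hi) as [k [Hk Hxk]].
   eapply Rle_trans; [apply Hxk| apply rmaxk_ge; auto]. }
 destruct (rmaxk_attain m (Srow x) Hm) as [js [Hjs EM]]. fold M in EM.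
 assert (HP : MU * P x js <= rsum n x).
 { unfold f_mu in Hf. assert (P x js <= rsum m (fun j => P x j)) by (apply rsum_term; auto; intros; left; apply P_pos).
   pose proof mu_pos. nra. }
 assert (EP : P x js = exp (/ MU * (M - 1))) by (unfold pj; rewrite EM; reflexivity).
 destruct (Rle_dec M (1 + eps)) as [HM|HM]. lra. exfalso.
 set (d := M - 1 - eps). assert (0 < d) by (unfold d; lra).
 pose proof mu_pos. destruct E_bounds as [E1 E2].
 assert (EE : exp (/ MU * (M - 1)) = exp (eps / MU) * exp (d / MU)) by (rewrite <- exp_plus; f_equal; unfold d; field; lra).
 pose proof (exp_ineq1_le (d / MU)).
 assert (MU * exp (/ MU * (M - 1)) >= MU * exp (eps / MU) * (1 + d / MU)).
 { rewrite EE. rewrite Rmult_assoc. apply Rle_ge, Rmult_le_compat_l. lra. apply Rmult_le_compat_l. left; apply exp_pos. lra. }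
 assert (MU * exp (eps / MU) * (1 + d / MU) = MU * exp (eps / MU) + exp (eps/MU) * d) by (field; lra).
 pose proof INRn_ge.
 assert (INR n * M = INR n * (1 + eps) + INR n * d) by (unfold d; ring).
 assert (exp (eps / MU) * d >= INR n * d) by nra.
 rewrite EP in HP. nra. Qed.

Lemma swapP x c : rsum m (fun j => P x j * rsum n (fun i => A j i * c i)) = rsum n (fun i => c i * (g x i + 1)).
Proof. transitivity (rsum m (fun j => rsum n (fun i => P x j * (A j i * c i)))).
 apply rsum_ext; intros; rewrite rsum_scal; auto.
 rewrite rsum_swap. apply rsum_ext; intros i Hi. unfold grad.
 replace (-1 + rsum m (fun j => A j i * P x j) + 1) with (rsum m (fun j => A j i * P x j)) by ring.
 rewrite <- rsum_scal. apply rsum_ext; intros; ring. Qed.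

Lemma step_eq t x i : stp t x i = x i * exp (- (AL * XIt t x i)).
Proof. unfold step. f_equal. f_equal. ring. Qed.

Lemma xip_cases t x i : (i < n)%nat -> XIt t x i = 0 \/ (XIt t x i = 1 /\ 1 < g x i) \/ (XIt t x i = g x i /\ Rabs (g x i) <= 1).
Proof. intros Hi. destruct (xit_cases t x i) as [E|E]; auto. rewrite E.
 destruct (xi_cases x i Hi) as [[E1 _]|[[E1 H1]|[E1 [_ H1]]]]; rewrite E1; auto. Qed.

Lemma xip_abs t x i : (i < n)%nat -> Rabs (XIt t x i) <= 1.
Proof. intros Hi. destruct (xip_cases t x i Hi) as [E|[[E _]|[E H]]]; rewrite E; auto.
 rewrite Rabs_R0; lra. rewrite Rabs_R1; lra. Qed.

Lemma xip_sq t x i : (i < n)%nat -> XIt t x i ^ 2 <= XIt t x i * g x i.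
Proof. intros Hi. destruct (xip_cases t x i Hi) as [E|[[E H]|[E H]]]; rewrite E; simpl; nra. Qed.

Definition Dt t x := rsum n (fun i => x i * XIt t x i * g x i).

Lemma Dt_nonneg t x : (forall i, (i < n)%nat -> 0 < x i) -> 0 <= Dt t x.
Proof. intros Hx. apply rsum_nonneg; intros i Hi. pose proof (xip_sq t x i Hi). pose proof (Hx i Hi).
 assert (0 <= XIt t x i ^ 2) by apply pow2_ge_0. 
 rewrite Rmult_assoc. apply Rmult_le_pos; lra. Qed.

Lemma descent t x : Inv x -> f (stp t x) <= f x - (1/3) * AL * Dt t x.
Proof. intros HI. pose proof (row_bound x HI) as Hrow. destruct HI as [Hx Hf].
 pose proof al_pos as Hal. pose proof al_le as Hal2. pose proof mu_pos as Hmu.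
 set (xp := stp t x). set (xs i := XIt t x i).
 set (dl i := xp i - x i).
 assert (Hdl : forall i, dl i = x i * (exp (- (AL * xs i)) - 1)) by (intros; unfold dl, xp; rewrite step_eq; fold (xs i); ring).
 assert (Hdla : forall i, (i < n)%nat -> Rabs (dl i) <= 2 * AL * (x i * Rabs (xs i))).
 { intros i Hi. rewrite Hdl. pose proof (xip_abs t x i Hi). fold (xs i) in H. pose proof (Hx i Hi).
   assert (Rabs (AL * xs i) <= 1/4) by (rewrite Rabs_mult, Rabs_right by lra; nra).
   destruct (exp_m1_bounds _ H1) as [B1 B2]. rewrite Rabs_mult, (Rabs_right (x i)) by lra.
   assert (Rabs (exp (- (AL * xs i)) - 1) <= 2 * AL * Rabs (xs i)).
   { rewrite Rabs_mult, (Rabs_right AL) in H1 by lra. assert ((AL * xs i)^2 <= AL * Rabs (xs i)).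
     { assert (xs i ^2 <= Rabs (xs i)) by (unfold Rabs in *; destruct Rcase_abs; nra).
       assert ((AL * xs i)^2 = AL^2 * xs i ^2) by ring. assert (0 <= Rabs (xs i)) by apply Rabs_pos.
       assert (AL^2 * xs i^2 <= AL^2 * Rabs (xs i)) by (apply Rmult_le_compat_l; nra). nra. }
     assert (- (AL * Rabs (xs i)) <= AL * xs i <= AL * Rabs (xs i)) by (unfold Rabs; destruct Rcase_abs; nra).
     unfold Rabs at 1; destruct Rcase_abs; lra. }
   nra. }
 set (Dl j := rsum n (fun i => A j i * dl i)).
 assert (HS : forall j, Srow xp j = Srow x j + Dl j).
 { intros j. unfold Srow, Dl. rewrite <- rsum_plus. apply rsum_ext; intros i Hi. unfold dl; ring. }
 set (Z j := rsum n (fun i => A j i * x i * Rabs (xs i))).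
 assert (HZ : forall j, (j < m)%nat -> Rabs (Dl j) <= 2 * AL * Z j).
 { intros j Hj. unfold Dl, Z. eapply Rle_trans. apply rsum_abs. rewrite <- rsum_scal. apply rsum_le. intros i Hi.
   rewrite Rabs_mult, (Rabs_right (A j i)) by (apply Rle_ge, HA; auto). pose proof (Hdla i Hi). pose proof (HA j i Hj Hi). nra. }
 assert (HZS : forall j, (j < m)%nat -> 0 <= Z j <= Srow x j).
 { intros j Hj. split. apply rsum_nonneg; intros i Hi. pose proof (HA j i Hj Hi). pose proof (Hx i Hi). pose proof (Rabs_pos (xs i)). 
   apply Rmult_le_pos; nra. unfold Z, Srow. apply rsum_le. intros i Hi. pose proof (HA j i Hj Hi). pose proof (Hx i Hi). pose proof (xip_abs t x i Hi).
   fold (xs i) in H1. assert (0 <= A j i * x i) by nra. nra. }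
 assert (HD2 : forall j, (j < m)%nat -> Dl j ^ 2 <= 6 * AL^2 * rsum n (fun i => A j i * x i * xs i ^ 2)).
 { intros j Hj. assert (Dl j ^ 2 <= (2 * AL * Z j)^2).
   { pose proof (HZ j Hj). pose proof (Rabs_pos (Dl j)). replace (Dl j ^2) with (Rabs (Dl j) ^ 2) by (unfold Rabs; destruct Rcase_abs; ring). 
     apply pow_incr; lra. }
   assert (Z j ^ 2 <= Srow x j * rsum n (fun i => A j i * x i * xs i ^ 2)).
   { unfold Z. replace (rsum n (fun i => A j i * x i * xs i ^ 2)) with (rsum n (fun i => (A j i * x i) * (Rabs (xs i))^2)).
     apply rsum_CS. intros i Hi. pose proof (HA j i Hj Hi). pose proof (Hx i Hi). nra.
     apply rsum_ext; intros i Hi. f_equal. unfold Rabs; destruct Rcase_abs; ring. }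
   assert (0 <= rsum n (fun i => A j i * x i * xs i ^ 2)).
   { apply rsum_nonneg; intros i Hi. pose proof (HA j i Hj Hi). pose proof (Hx i Hi). pose proof (pow2_ge_0 (xs i)). 
     apply Rmult_le_pos; nra. }
   pose proof (Hrow j Hj). destruct (HZS j Hj).
   assert (Srow x j * rsum n (fun i => A j i * x i * xs i ^ 2) <= 3/2 * rsum n (fun i => A j i * x i * xs i ^ 2)) by (apply Rmult_le_compat_r; lra).
   assert ((2 * AL * Z j)^2 = 4 * AL^2 * Z j ^2) by ring. assert (0 <= AL^2) by nra. nra. }
 assert (HP : forall j, (j < m)%nat -> MU * (P xp j - P x j) <= P x j * Dl j + (6 * AL^2 / MU) * (P x j * rsum n (fun i => A j i * (x i * xs i ^ 2)))).
 { intros j Hj. assert (E : P xp j = P x j * exp (Dl j / MU)).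
   { unfold pj. fold (Srow xp j) (Srow x j). rewrite HS, <- exp_plus. f_equal. field. lra. }
   assert (Hb : Rabs (Dl j / MU) <= 1/4).
   { unfold Rdiv. rewrite Rabs_mult, (Rabs_right (/ MU)) by (apply Rle_ge, Rlt_le, Rinv_0_lt_compat; lra).
     pose proof (HZ j Hj). pose proof (HZS j Hj). pose proof (Hrow j Hj). rewrite al_eq in *.
     apply (Rmult_le_reg_r MU). lra. rewrite Rmult_assoc, Rinv_l by lra. nra. }
   pose proof (exp_quad _ Hb). pose proof (P_pos x j). rewrite E.
   assert (MU * (P x j * exp (Dl j / MU) - P x j) <= MU * (P x j * (Dl j / MU + (Dl j / MU)^2))).
   { apply Rmult_le_compat_l. lra. nra. }
   assert (MU * (P x j * (Dl j / MU + (Dl j / MU)^2)) = P x j * Dl j + P x j * Dl j ^ 2 / MU) by (field; lra).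
   assert (Ers : rsum n (fun i => A j i * (x i * xs i ^ 2)) = rsum n (fun i => A j i * x i * xs i ^ 2)) by (apply rsum_ext; intros; ring).
   rewrite Ers. pose proof (HD2 j Hj).
   assert (P x j * Dl j ^ 2 / MU <= 6 * AL ^ 2 / MU * (P x j * rsum n (fun i => A j i * x i * xs i ^ 2))).
   { replace (6 * AL ^ 2 / MU * (P x j * rsum n (fun i => A j i * x i * xs i ^ 2))) with (P x j * (6 * AL ^ 2 * rsum n (fun i => A j i * x i * xs i ^ 2)) / MU) by (field; lra).
     unfold Rdiv. apply Rmult_le_compat_r. left; apply Rinv_0_lt_compat; lra. apply Rmult_le_compat_l; lra. }
   lra. }
 assert (Hsum : MU * (rsum m (fun j => P xp j) - rsum m (fun j => P x j)) <=
   rsum n (fun i => dl i * (g x i + 1)) + (6 * AL^2 / MU) * rsum n (fun i => (x i * xs i ^ 2) * (g x i + 1))).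
 { rewrite <- !swapP. rewrite <- rsum_scal, <- rsum_minus, <- rsum_scal, <- rsum_plus.
   apply rsum_le. intros j Hj. apply HP; auto. }
 assert (Hcoord : forall i, (i < n)%nat -> dl i * g x i + 3/10 * AL * x i * xs i ^ 2 * (g x i + 1) <= - (1/3) * AL * x i * xs i * g x i).
 { intros i Hi. rewrite Hdl. pose proof (coord_ineq (x i) AL (g x i) (xs i) (Hx i Hi) ltac:(lra) (grad_ge x i Hi) (xip_cases t x i Hi)). lra. }
 unfold f_mu. fold xp.
 assert (E1 : - rsum n xp + rsum n x = - rsum n dl) by (unfold dl; rewrite rsum_minus; ring).
 assert (E2 : 6 * AL^2 / MU = 3/10 * AL) by (rewrite al_eq; field; lra).
 rewrite E2 in Hsum.
 assert (rsum n (fun i => - dl i + dl i * (g x i + 1) + 3/10 * AL * (x i * xs i ^ 2 * (g x i + 1))) <= rsum n (fun i => - (1/3) * AL * (x i * xs i * g x i))).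
 { apply rsum_le. intros i Hi. pose proof (Hcoord i Hi). lra. }
 rewrite !rsum_plus, rsum_scal, rsum_scal in H.
 assert (rsum n (fun i => - dl i) = - rsum n dl) by (transitivity (rsum n (fun i => -1 * dl i)); [apply rsum_ext; intros; ring| rewrite rsum_scal; ring]).
 unfold Dt. change (rsum n (fun i => x i * XIt t x i * g x i)) with (rsum n (fun i => x i * xs i * g x i)).
 rewrite Rmult_minus_distr_l in Hsum. lra.
Qed.

Lemma step_pos t x : (forall i, (i < n)%nat -> 0 < x i) -> forall i, (i < n)%nat -> 0 < stp t x i.
Proof. intros Hx i Hi. rewrite step_eq. apply Rmult_lt_0_compat; auto. apply exp_pos. Qed.

Lemma descent_le t x : Inv x -> f (stp t x) <= f x.
Proof. intros HI. pose proof (descent t x HI). pose proof (Dt_nonneg t x (proj1 HI)). pose proof al_pos. nra. Qed.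

Lemma Inv_step t x : Inv x -> Inv (stp t x).
Proof. intros HI. split. apply step_pos, HI. pose proof (descent_le t x HI). destruct HI; lra. Qed.

Section WithU.
Variable u : nat -> R.
Hypothesis Hu : forall i, (i < n)%nat -> 0 <= u i.

Definition Phi x := rsum n (fun i => - u i * ln (x i) + x i).

Lemma mirror t x : (forall i, (i < n)%nat -> 0 < x i) ->
  AL * rsum n (fun i => XIt t x i * (x i - u i)) <= Phi x - Phi (stp t x) + AL^2 * rsum n (fun i => x i * XIt t x i ^ 2).
Proof. intros Hx. unfold Phi. rewrite <- rsum_scal, <- rsum_scal, <- rsum_minus, <- rsum_plus. apply rsum_le. intros i Hi.
 rewrite step_eq. pose proof (Hx i Hi). pose proof (xip_abs t x i Hi). pose proof al_pos. pose proof al_le.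
 set (a := AL * XIt t x i). rewrite ln_mult, ln_exp by (auto; apply exp_pos).
 assert (Rabs a <= 1/4) by (unfold a; rewrite Rabs_mult, Rabs_right by lra; nra).
 destruct (exp_m1_bounds a H3) as [B1 B2].
 assert (x i * (exp (- a) - 1) <= x i * (- a + a^2)) by (apply Rmult_le_compat_l; lra).
 assert (AL^2 * (x i * XIt t x i ^ 2) = x i * a^2) by (unfold a; ring).
 rewrite H5. unfold a in *. nra. Qed.

Lemma convex x : f x - f u <= rsum n (fun i => g x i * (x i - u i)).
Proof. unfold f_mu. pose proof mu_pos.
 assert (HP : forall j, P x j * (1 + (Srow u j - Srow x j) / MU) <= P u j).
 { intros j. unfold pj. fold (Srow u j) (Srow x j). eapply Rle_trans; [|apply (exp_conv (/ MU * (Srow x j - 1)))].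
   right. f_equal. field. lra. }
 assert (H0 : MU * rsum m (fun j => P x j) + rsum m (fun j => P x j * (Srow u j - Srow x j)) <= MU * rsum m (fun j => P u j)).
 { rewrite <- !rsum_scal, <- rsum_plus. apply rsum_le. intros j Hj. pose proof (HP j).
   assert (HH : MU * (P x j * (1 + (Srow u j - Srow x j) / MU)) <= MU * P u j) by (apply Rmult_le_compat_l; lra).
   replace (MU * (P x j * (1 + (Srow u j - Srow x j) / MU))) with (MU * P x j + P x j * (Srow u j - Srow x j)) in HH by (field; lra). lra. }
 assert (E : rsum m (fun j => P x j * (Srow u j - Srow x j)) = rsum n (fun i => (u i - x i) * (g x i + 1))).
 { rewrite <- swapP. apply rsum_ext; intros j Hj. f_equal. unfold Srow. rewrite <- rsum_minus. apply rsum_ext; intros; ring. }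
 rewrite E in H0.
 assert (rsum n (fun i => g x i * (x i - u i)) = rsum n (fun i => (x i - u i) * (g x i + 1)) - rsum n x + rsum n u).
 { rewrite <- rsum_minus, <- rsum_plus. apply rsum_ext; intros; ring. }
 assert (rsum n (fun i => (u i - x i) * (g x i + 1)) = - rsum n (fun i => (x i - u i) * (g x i + 1))).
 { transitivity (rsum n (fun i => -1 * ((x i - u i) * (g x i + 1)))). apply rsum_ext; intros; ring. rewrite rsum_scal; ring. }
 lra. Qed.

Lemma trunc x i : (i < n)%nat -> 0 <= x i ->
  g x i * (x i - u i) <= XI x i * (x i - u i) + x i * XI x i * g x i + eps * (x i + u i).
Proof. intros Hi Hx. pose proof (Hu i Hi). destruct (xi_cases x i Hi) as [[E H1]|[[E H1]|[E [H1 H2]]]]; rewrite E.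
 - unfold Rabs in H1; destruct Rcase_abs; nra.
 - nra.
 - nra. Qed.

Definition DPhi t x := Phi x - Phi (stp t x).
Definition Df t x := f x - f (stp t x).

Lemma one_step x : Inv x ->
  AL * (f x - f u) <= rsum W (fun t => DPhi t x + 4 * Df t x) + AL * eps * (rsum n x + rsum n u).
Proof. intros HI. pose proof al_pos. pose proof al_le. destruct HI as [Hx Hf].
 assert (H1 := convex x).
 assert (H2 : rsum n (fun i => g x i * (x i - u i)) <= rsum n (fun i => XI x i * (x i - u i)) + rsum n (fun i => x i * XI x i * g x i) + eps * (rsum n x + rsum n u)).
 { rewrite <- (rsum_plus n x u), <- rsum_scal, <- rsum_plus, <- rsum_plus. apply rsum_le. intros i Hi. apply trunc; auto. left; auto. }
 assert (E1 : rsum n (fun i => XI x i * (x i - u i)) = rsum W (fun t => rsum n (fun i => XIt t x i * (x i - u i)))).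
 { rewrite rsum_swap. apply rsum_ext; intros i Hi. rewrite <- (xi_decomp x i Hi). 
   rewrite Rmult_comm, <- rsum_scal. apply rsum_ext; intros; ring. }
 assert (E2 : rsum n (fun i => x i * XI x i * g x i) = rsum W (fun t => Dt t x)).
 { unfold Dt. rewrite rsum_swap. apply rsum_ext; intros i Hi. rewrite <- (xi_decomp x i Hi). 
   transitivity ((x i * g x i) * rsum W (fun t => XIt t x i)). ring. rewrite <- rsum_scal. apply rsum_ext; intros; ring. }
 assert (H3 : forall t, AL * rsum n (fun i => XIt t x i * (x i - u i)) + AL * Dt t x <= DPhi t x + 4 * Df t x).
 { intros t. pose proof (mirror t x Hx). pose proof (descent t x (conj Hx Hf)).
   assert (rsum n (fun i => x i * XIt t x i ^ 2) <= Dt t x).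
   { unfold Dt. apply rsum_le. intros i Hi. pose proof (xip_sq t x i Hi). pose proof (Hx i Hi).
     rewrite Rmult_assoc. apply Rmult_le_compat_l; lra. }
   pose proof (Dt_nonneg t x Hx). unfold DPhi, Df.
   assert (AL^2 * rsum n (fun i => x i * XIt t x i ^ 2) <= AL^2 * Dt t x) by (apply Rmult_le_compat_l; nra).
   assert (AL ^2 * Dt t x <= AL * Dt t x / 80) by (assert (0 <= AL * Dt t x) by nra; nra).
   nra. }
 assert (H4 : AL * rsum n (fun i => XI x i * (x i - u i)) + AL * rsum n (fun i => x i * XI x i * g x i) <= rsum W (fun t => DPhi t x + 4 * Df t x)).
 { rewrite E1, E2, <- !rsum_scal, <- rsum_plus. apply rsum_le. intros t _. apply H3. }
 nra. Qed.

End WithU.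

Fixpoint Ek (k : nat) (h : (nat -> R) -> R) (x : nat -> R) : R :=
  match k with O => h x | S k' => / INR W * rsum W (fun t => Ek k' h (stp t x)) end.

Lemma expect_Ek k x : expect_f m n A eps k x = Ek k f x.
Proof. revert x; induction k; intros x; simpl; auto. f_equal. apply rsum_ext; intros; auto. Qed.

Lemma eps_pos : 0 < eps. Proof. lra. Qed.
Lemma W_pos : 0 < INR W. Proof. destruct W_facts; lra. Qed.

Lemma avg_const c : / INR W * rsum W (fun _ => c) = c.
Proof. rewrite rsum_const. pose proof W_pos. field. lra. Qed.

Lemma Ek_lb h B : (forall x, Inv x -> B <= h x) -> forall k x, Inv x -> B <= Ek k h x.
Proof. intros Hh k. induction k; intros x Hx; simpl; auto. rewrite <- (avg_const B) at 1.
 apply Rmult_le_compat_l. left; apply Rinv_0_lt_compat, W_pos. apply rsum_le; intros t _. apply IHk, Inv_step; auto. Qed.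

Lemma Ek_mono k x : Inv x -> Ek k f x <= f x.
Proof. revert x; induction k; intros x Hx; simpl. lra. rewrite <- (avg_const (f x)).
 apply Rmult_le_compat_l. left; apply Rinv_0_lt_compat, W_pos. apply rsum_le; intros t _.
 eapply Rle_trans. apply IHk, Inv_step; auto. apply descent_le; auto. Qed.

Lemma main_ind u (Hu : forall i, (i < n)%nat -> 0 <= u i) Bx (HB : forall x, Inv x -> rsum n x <= Bx) :
  forall k x, Inv x -> AL * INR k * (Ek k f x - (f u + eps * (Bx + rsum n u))) <=
    INR W * (Phi u x - Ek k (Phi u) x) + INR W * 4 * (f x - Ek k f x).
Proof. set (c := f u + eps * (Bx + rsum n u)). pose proof W_pos as HW. pose proof al_pos.
 induction k; intros x Hx.
 - simpl. lra.
 - assert (H1 : rsum W (fun t => AL * INR k * (Ek k f (stp t x) - c)) <=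
      rsum W (fun t => INR W * (Phi u (stp t x) - Ek k (Phi u) (stp t x)) + INR W * 4 * (f (stp t x) - Ek k f (stp t x)))).
   { apply rsum_le; intros t _. apply IHk, Inv_step; auto. }
   rewrite rsum_plus, !rsum_scal, !rsum_minus in H1. rewrite rsum_const in H1.
   assert (H2 := one_step u Hu x Hx).
   assert (Hs : rsum n x <= Bx) by (apply HB; auto).
   assert (H2' : AL * (f x - c) <= rsum W (fun t => DPhi u t x + 4 * Df t x)).
   { unfold c. pose proof eps_pos. assert (AL * eps * rsum n x <= AL * eps * Bx) by (apply Rmult_le_compat_l; nra).
     replace (AL * (f x - (f u + eps * (Bx + rsum n u)))) with (AL * (f x - f u) - AL * eps * Bx - AL * eps * rsum n u) by ring.
     replace (AL * eps * (rsum n x + rsum n u)) with (AL * eps * rsum n x + AL * eps * rsum n u) in H2 by ring. lra. }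
   unfold DPhi, Df in H2'. rewrite rsum_plus, rsum_scal, !rsum_minus, !rsum_const in H2'.
   assert (H3 := Ek_mono (S k) x Hx). simpl Ek in *.
   set (SA := rsum W (fun t => Ek k f (stp t x))) in *.
   set (SB := rsum W (fun t => Ek k (Phi u) (stp t x))) in *.
   set (SP := rsum W (fun t => Phi u (stp t x))) in *.
   set (SF := rsum W (fun t => f (stp t x))) in *.
   set (Wr := INR W) in *.
   set (a := / Wr * SA) in *. set (b := / Wr * SB). set (p := / Wr * SP). set (q := / Wr * SF).
   assert (EA : SA = Wr * a) by (unfold a; field; lra). assert (EB : SB = Wr * b) by (unfold b; field; lra).
   assert (EP : SP = Wr * p) by (unfold p; field; lra). assert (EF : SF = Wr * q) by (unfold q; field; lra).
   rewrite EA, EB, EP, EF in H1. rewrite EP, EF in H2'.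
   assert (H1' : AL * INR k * (a - c) <= Wr * (p - b) + Wr * 4 * (q - a)).
   { apply (Rmult_le_reg_l Wr). auto. 
     replace (Wr * (AL * INR k * (a - c))) with (AL * INR k * (Wr * a - Wr * c)) by ring.
     replace (Wr * (Wr * (p - b) + Wr * 4 * (q - a))) with (Wr * (Wr * p - Wr * b) + Wr * 4 * (Wr * q - Wr * a)) by ring. lra. }
   rewrite S_INR. replace (Wr * (Phi u x - b)) with (Wr * Phi u x - Wr * b) by ring.
   assert (AL * (a - c) <= AL * (f x - c)) by (apply Rmult_le_compat_l; lra).
   replace (AL * (INR k + 1) * (a - c)) with (AL * INR k * (a - c) + AL * (a - c)) by ring.
   replace (Wr * 4 * (f x - a)) with (Wr * 4 * (q - a) + 4 * (Wr * f x - Wr * q)) by ring.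
   lra.
Qed.

Lemma exp_m2LL : exp (- (eps / MU / 2)) = / NN ^ 2.
Proof. rewrite eps_over_mu. replace (- (4 * LL / 2)) with (- (LL + LL)) by field.
 rewrite exp_Ropp, exp_plus, NN_LL. simpl. f_equal; ring. Qed.

Lemma Psmall y : (forall j, (j < m)%nat -> Srow y j <= 1 - eps/2) -> MU * rsum m (fun j => P y j) <= eps^2 / (4 * INR n).
Proof. intros Hy. pose proof mu_pos. pose proof mu_le. pose proof NN_ge2. pose proof INRn_ge. pose proof INRm_ge.
 assert (Hb : rsum m (fun j => P y j) <= INR m * / NN ^ 2).
 { rewrite <- rsum_const. apply rsum_le; intros j Hj. rewrite <- exp_m2LL. unfold pj. fold (Srow y j).
   pose proof (Hy j Hj). destruct (Rle_lt_or_eq_dec _ _ (Rmult_le_compat_l (/ MU) _ _ (Rlt_le _ _ (Rinv_0_lt_compat _ H)) (Rplus_le_compat_r (-1) _ _ H4))).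
   left; apply exp_increasing. replace (- (eps / MU / 2)) with (/ MU * (1 - eps / 2 + -1)) by (field; lra). lra.
   right. f_equal. replace (- (eps / MU / 2)) with (/ MU * (1 - eps / 2 + -1)) by (field; lra). unfold Rminus. lra. }
 assert (E : INR m * / NN ^ 2 = eps^2 / (INR n ^ 2 * INR m)) by (unfold NN; field; lra).
 rewrite E in Hb. assert (eps ^ 2 / (INR n ^ 2 * INR m) <= eps^2 / INR n).
 { unfold Rdiv. apply Rmult_le_compat_l. nra. apply Rinv_le_contravar. lra. simpl; nra. }
 assert (0 <= rsum m (fun j => P y j)) by (apply rsum_nonneg; intros; left; apply P_pos).
 assert (MU * rsum m (fun j => P y j) <= eps/2 * (eps^2 / INR n)) by (apply Rmult_le_compat; lra).
 assert (eps / 2 * (eps ^ 2 / INR n) <= eps ^ 2 / (4 * INR n)).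
 { replace (eps / 2 * (eps ^ 2 / INR n)) with ((eps/2) * eps^2 / INR n) by (field; lra).
   replace (eps ^ 2 / (4 * INR n)) with ((1/4) * eps^2 / INR n) by (field; lra). unfold Rdiv.
   apply Rmult_le_compat_r. left; apply Rinv_0_lt_compat; lra. nra. }
 lra. Qed.

Notation X0 := (x0 m n A eps).

Lemma x0_pos i : (i < n)%nat -> 0 < X0 i.
Proof. intros Hi. unfold x0. pose proof (Hcol i Hi). pose proof INRn_ge. apply Rdiv_lt_0_compat. lra. nra. Qed.

Lemma Srow_x0 j : (j < m)%nat -> Srow X0 j <= 1 - eps/2.
Proof. intros Hj. pose proof INRn_ge. replace (1 - eps/2) with (INR n * ((1 - eps/2) / INR n)) by (field; lra).
 rewrite <- rsum_const. apply rsum_le; intros i Hi. unfold x0. pose proof (Hcol i Hi). pose proof (col_ge i j Hi Hj). pose proof (HA j i Hj Hi).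
 replace (A j i * ((1 - eps / 2) / (INR n * colnorm m A i))) with ((A j i / colnorm m A i) * ((1 - eps/2) / INR n)) by (field; lra).
 rewrite <- (Rmult_1_l ((1 - eps / 2) / INR n)) at 2. apply Rmult_le_compat_r. unfold Rdiv; apply Rmult_le_pos; [lra| left; apply Rinv_0_lt_compat; lra].
 apply (Rmult_le_reg_r (colnorm m A i)). lra. field_simplify; lra. Qed.

Lemma Inv_x0 i0 : (i0 < n)%nat -> colnorm m A i0 = 1 -> Inv X0.
Proof. intros Hi0 Hc. split. apply x0_pos. unfold f_mu. pose proof (Psmall X0 Srow_x0).
 assert (X0 i0 <= rsum n X0) by (apply rsum_term; auto; intros; left; apply x0_pos; auto).
 unfold x0 in H0 at 1. rewrite Hc, Rmult_1_r in H0. pose proof INRn_ge.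
 assert (eps ^ 2 / (4 * INR n) <= (1 - eps / 2) / INR n).
 { unfold Rdiv. rewrite Rinv_mult. replace (eps ^ 2 * (/ 4 * / INR n)) with ((eps^2/4) * / INR n) by (field; lra).
   apply Rmult_le_compat_r. left; apply Rinv_0_lt_compat; lra. nra. }
 lra. Qed.

Lemma final OPT i0 : is_OPT m n A OPT -> (i0 < n)%nat -> colnorm m A i0 = 1 ->
  Ek (T m n eps) f X0 <= - (1 - 5 * eps) * OPT.
Proof. intros [Hmax [xs [[Hxs0 Hxs1] Hxsum]]] Hi0 Hc.
 pose proof INRn_ge. pose proof INRm_ge. pose proof al_pos. pose proof W_pos. pose proof mu_pos.
 assert (HO1 : 1 <= OPT).
 { set (e := fun i => if Nat.eq_dec i i0 then 1 else 0).
   assert (Hfe : feasible m n A e). split. intros i _. unfold e; destruct Nat.eq_dec; lra.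
   intros j Hj. unfold e. rewrite rsum_delta by auto. rewrite <- Hc. apply col_ge; auto.
   pose proof (Hmax e Hfe). replace (rsum n e) with 1 in H4; auto.
   transitivity (rsum n (fun i => 1 * (if Nat.eq_dec i i0 then 1 else 0))). rewrite rsum_delta; auto.
   apply rsum_ext; intros; unfold e; ring. }
 set (u := fun i => (1 - eps/2) * xs i).
 assert (Hu : forall i, (i < n)%nat -> 0 <= u i) by (intros; unfold u; pose proof (Hxs0 i H4); nra).
 assert (Hsu : rsum n u = (1 - eps/2) * OPT) by (unfold u; rewrite rsum_scal, Hxsum; auto).
 set (Bx := (1 + eps) * OPT).
 assert (HB : forall x, Inv x -> rsum n x <= Bx).
 { intros x HI. set (y := fun i => x i / (1 + eps)).
   assert (Hfy : feasible m n A y). split. intros i Hi. unfold y. pose proof (proj1 HI i Hi). unfold Rdiv; apply Rmult_le_pos; [lra| left; apply Rinv_0_lt_compat; lra].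
   intros j Hj. pose proof (row_bound x HI j Hj). unfold Srow in H4.
   replace (rsum n (fun i => A j i * y i)) with (/ (1+eps) * rsum n (fun i => A j i * x i)).
   apply (Rmult_le_reg_l (1+eps)). lra. field_simplify; lra.
   rewrite <- rsum_scal. apply rsum_ext; intros; unfold y; field; lra.
   pose proof (Hmax y Hfy). unfold y in H4. unfold Rdiv in H4. rewrite (rsum_ext n _ (fun i => / (1+eps) * x i)) in H4 by (intros; ring).
   rewrite rsum_scal in H4. unfold Bx. apply (Rmult_le_compat_l (1+eps)) in H4; [|lra].
   rewrite <- Rmult_assoc, Rinv_r, Rmult_1_l in H4 by lra. lra. }
 assert (HIx0 := Inv_x0 i0 Hi0 Hc).
 pose proof (main_ind u Hu Bx HB (T m n eps) X0 HIx0) as HM.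
 set (E := Ek (T m n eps) f X0) in *. set (EP := Ek (T m n eps) (Phi u) X0) in *.
 set (Pmin := rsum n (fun i => u i - u i * ln (u i))).
 assert (HPl : Pmin <= EP).
 { apply Ek_lb; auto. intros y [Hy _]. unfold Pmin, Phi. apply rsum_le. intros i Hi. pose proof (Hy i Hi). pose proof (Hu i Hi).
   destruct (Req_dec (u i) 0) as [Z|NZ]. rewrite Z; lra.
   assert (ln (y i / u i) <= y i / u i - 1) by (apply ln_le_sub1; apply Rdiv_lt_0_compat; lra).
   assert (Eln : ln (y i / u i) = ln (y i) - ln (u i)) by (unfold Rdiv; rewrite ln_mult, ln_Rinv by (try apply Rinv_0_lt_compat; lra); ring). rewrite Eln in H6. apply (Rmult_le_compat_l (u i)) in H6; [|lra].
   replace (u i * (y i / u i - 1)) with (y i - u i) in H6 by (field; lra). lra. }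
 assert (Hsx0 : rsum n X0 <= OPT).
 { apply Hmax. split. intros; left; apply x0_pos; auto. intros j Hj. pose proof (Srow_x0 j Hj). unfold Srow in H4. lra. }
 assert (HPu : Phi u X0 - Pmin <= OPT * ln (INR n) + OPT).
 { unfold Phi, Pmin. rewrite <- rsum_minus.
   assert (rsum n (fun i => - u i * ln (X0 i) + X0 i - (u i - u i * ln (u i))) <= rsum n (fun i => ln (INR n) * u i + X0 i)).
   { apply rsum_le. intros i Hi. pose proof (Hu i Hi). pose proof (x0_pos i Hi).
     destruct (Req_dec (u i) 0) as [Z|NZ]. rewrite Z. pose proof (ln_nonneg (INR n) H). nra.
     assert (u i <= INR n * X0 i).
     { destruct (col_attain i Hi) as [j [Hj Ej]]. pose proof (Hxs1 j Hj).
       assert (HAx : A j i * xs i <= rsum n (fun i => A j i * xs i)).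
       { apply (rsum_term n (fun i => A j i * xs i)); auto. intros k Hk. apply Rmult_le_pos; auto. }
       pose proof (Hcol i Hi). unfold u, x0. rewrite Ej in HAx.
       replace (INR n * ((1 - eps / 2) / (INR n * colnorm m A i))) with ((1 - eps/2) / colnorm m A i) by (field; lra).
       assert (xs i <= / colnorm m A i) by (apply (Rmult_le_reg_r (colnorm m A i)); [lra| rewrite Rinv_l by lra; nra]).
       unfold Rdiv; apply Rmult_le_compat_l; lra. }
     assert (ln (u i) <= ln (INR n) + ln (X0 i)) by (rewrite <- ln_mult by lra; apply ln_mono; lra).
     assert (u i * ln (u i) <= u i * (ln (INR n) + ln (X0 i))) by (apply Rmult_le_compat_l; lra). nra. }
   rewrite rsum_plus, rsum_scal, Hsu in H4. pose proof (ln_nonneg (INR n) H).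
   assert (0 <= OPT * ln (INR n)) by nra.
   assert (ln (INR n) * ((1 - eps / 2) * OPT) = OPT * ln (INR n) - eps / 2 * (OPT * ln (INR n))) by ring.
   assert (0 <= eps / 2 * (OPT * ln (INR n))) by nra. lra. }
 assert (Hfl : - Bx <= E).
 { apply Ek_lb; auto. intros y HI. pose proof (HB y HI). unfold f_mu.
   assert (0 <= rsum m (fun j => P y j)) by (apply rsum_nonneg; intros; left; apply P_pos). nra. }
 assert (Hfx0 : f X0 <= 0) by apply HIx0.
 assert (Hfu : f u <= - (1 - eps/2) * OPT + eps / 8).
 { unfold f_mu. rewrite Hsu. assert (Hr : forall j, (j < m)%nat -> Srow u j <= 1 - eps/2).
   { intros j Hj. unfold Srow, u. rewrite (rsum_ext n _ (fun i => (1 - eps/2) * (A j i * xs i))) by (intros; ring).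
     rewrite rsum_scal. pose proof (Hxs1 j Hj). nra. }
   pose proof (Psmall u Hr). assert (eps ^ 2 / (4 * INR n) <= eps / 8).
   { apply (Rmult_le_reg_r (4 * INR n)). lra. field_simplify; nra. }
   lra. }
 assert (HT : 10 * INR W * ln (2 * INR n) / eps <= AL * INR (T m n eps)).
 { pose proof (nceil_ge (10 * INR W * ln (2 * INR n) / (AL * eps))). fold (T m n eps) in H4.
   apply (Rmult_le_compat_l AL) in H4; [|lra]. eapply Rle_trans; [|exact H4]. right; field; lra. }
 assert (Hl2n : 1/2 <= ln (2 * INR n)) by (eapply Rle_trans; [apply ln2_ge| apply ln_mono; lra]).
 assert (Hln : ln (INR n) <= ln (2 * INR n)) by (apply ln_mono; lra).
 set (c := f u + eps * (Bx + rsum n u)) in *.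
 assert (Hc1 : c <= - OPT + 23/8 * eps * OPT).
 { unfold c, Bx. rewrite Hsu. assert (eps <= eps * OPT) by nra. assert (eps * eps * OPT <= eps * OPT / 2) by (assert (0 <= eps * OPT) by nra; nra). nra. }
 assert (HR : AL * INR (T m n eps) * (E - c) <= INR W * OPT * (ln (2 * INR n) + 7)).
 { eapply Rle_trans; [exact HM|].
   assert (Phi u X0 - EP <= OPT * ln (2 * INR n) + OPT) by (assert (OPT * ln (INR n) <= OPT * ln (2 * INR n)) by (apply Rmult_le_compat_l; lra); lra).
   assert (f X0 - E <= 3/2 * OPT) by (unfold Bx in Hfl; nra).
   assert (INR W * (Phi u X0 - EP) <= INR W * (OPT * ln (2 * INR n) + OPT)) by (apply Rmult_le_compat_l; lra).
   assert (INR W * 4 * (f X0 - E) <= INR W * 4 * (3/2 * OPT)) by (apply Rmult_le_compat_l; lra).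
   assert (INR W * OPT * (ln (2 * INR n) + 7) = INR W * (OPT * ln (2 * INR n) + OPT) + INR W * 4 * (3/2 * OPT)) by field.
   lra. }
 destruct (Rle_dec E c) as [Hle|Hgt]. nra.
 assert (H10 : 10 * INR W * ln (2 * INR n) / eps * (E - c) <= INR W * OPT * (ln (2 * INR n) + 7)).
 { eapply Rle_trans; [|exact HR]. apply Rmult_le_compat_r; lra. }
 assert (H11 : 10 * ln (2 * INR n) * (E - c) <= eps * OPT * (ln (2 * INR n) + 7)).
 { apply (Rmult_le_reg_l (INR W / eps)). apply Rdiv_lt_0_compat; lra.
   replace (INR W / eps * (10 * ln (2 * INR n) * (E - c))) with (10 * INR W * ln (2 * INR n) / eps * (E - c)) by (field; lra).
   replace (INR W / eps * (eps * OPT * (ln (2 * INR n) + 7))) with (INR W * OPT * (ln (2 * INR n) + 7)) by (field; lra). auto. }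
 assert (eps * OPT * (ln (2 * INR n) + 7) <= 15 * eps * OPT * ln (2 * INR n)).
 { assert (0 <= eps * OPT) by nra. nra. }
 assert (E - c <= 3/2 * eps * OPT).
 { assert (10 * ln (2 * INR n) * (E - c) <= 10 * ln (2 * INR n) * (3/2 * eps * OPT)) by nra.
   apply (Rmult_le_reg_l (10 * ln (2 * INR n))). lra. auto. }
 nra.
Qed.

End Main.
Theorem theorem2p3 (m n : nat) (A : nat -> nat -> R) (eps OPT : R) :
  0 < eps <= 1 / 2 ->
  (forall j i, (j < m)%nat -> (i < n)%nat -> 0 <= A j i) ->
  (forall i, (i < n)%nat -> exists j, (j < m)%nat /\ A j i <> 0) ->
  (forall i, (i < n)%nat -> 1 <= colnorm m A i) ->
  (exists i, (i < n)%nat /\ colnorm m A i = 1) ->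
  is_OPT m n A OPT ->
  expect_f m n A eps (T m n eps) (x0 m n A eps) <= - (1 - 5 * eps) * OPT.
Proof.
  intros Heps HA Hnz Hcol [i0 [Hi0 Hc]] HO.
  destruct (Hnz i0 Hi0) as [j0 [Hj0 _]].
  assert (Hm : (1 <= m)%nat) by lia. assert (Hn : (1 <= n)%nat) by lia.
  rewrite expect_Ek. eapply (final m n A eps Heps HA Hm Hn Hcol OPT i0); eauto.
Qed.
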